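(* Let $M\ge K\ge 2$ be integers and let $P_u>\frac{1}{M-1}$. Then $$K\log_2\!\left(1+\frac{P_uM}{P_u(K-1)+1}\right)\ge K\log_2\!\left(1+P_u(M-K+1)\right)$$ if and only if $K\ge K_{\mathrm{cross,UL}}:=M+1-\dfrac{1}{P_u}$.
   Context: The left-hand side is the paper's closed-form low-SNR ergodic uplink sum-rate expression for maximum ratio combining and the right-hand side that for zero-forcing reception, with $M$ base-station antennas, $K$ single-antenna users and per-user transmit power $P_u$ (unit noise variance). The lemma states that MRC gives the better sum rate exactly when the number of users is at least $K_{\mathrm{cross,UL}}$. *)

(* Defs.v *)
From Stdlib Require Import Reals.
Open Scope R_scope.

Definition log2 (x : R) : R := ln x / ln 2.

(* Low-SNR ergodic uplink sum rate, MRC. *)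
Definition rate_MRC (M K : nat) (Pu : R) : R :=
  INR K * log2 (1 + Pu * INR M / (Pu * (INR K - 1) + 1)).

(* Low-SNR ergodic uplink sum rate, ZF. *)
Definition rate_ZF (M K : nat) (Pu : R) : R :=
  INR K * log2 (1 + Pu * (INR M - INR K + 1)).

Definition K_cross_UL (M : nat) (Pu : R) : R := INR M + 1 - 1 / Pu.

(* Main.v *)
Require Import Defs.
From Stdlib Require Import Reals Lra Psatz.
Open Scope R_scope.

Lemma lnmono a b : 0 < a -> 0 < b -> (ln a >= ln b <-> a >= b).
Proof.
  intros ha hb; split; intro h.
  - destruct (Rlt_or_le a b) as [l|l]; [|lra].
    pose proof (ln_increasing a b ha l); lra.
  - destruct (Rle_lt_or_eq_dec b a) as [l|l]; [lra| |subst; lra].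
    pose proof (ln_increasing b a hb l); lra.
Qed.

Lemma scale k l x y : 0 < k -> 0 < l -> (k * (x / l) >= k * (y / l) <-> x >= y).
Proof.
  intros hk hl.
  assert (hi : 0 < / l) by (apply Rinv_0_lt_compat; lra).
  unfold Rdiv; split; intro h.
  - assert (x * / l >= y * / l) by nra.
    assert (x * / l * l >= y * / l * l) by nra.
    assert (ex : x * / l * l = x) by (field; lra).
    assert (ey : y * / l * l = y) by (field; lra).
    lra.
  - apply Rmult_ge_compat_l; [lra|]. apply Rmult_ge_compat_r; lra.
Qed.

Theorem lemma10 (M K : nat) (Pu : R) :
  (2 <= K)%nat -> (K <= M)%nat -> Pu > 1 / (INR M - 1) ->
  (rate_MRC M K Pu >= rate_ZF M K Pu <-> INR K >= K_cross_UL M Pu).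
Proof.
  intros h2 hkm hp.
  apply le_INR in h2; apply le_INR in hkm.
  change (INR 2) with 2 in h2.
  set (m := INR M) in *; set (k := INR K) in *.
  assert (hp0 : 0 < Pu).
  { assert (0 < 1 / (m - 1)) by (unfold Rdiv; rewrite Rmult_1_l; apply Rinv_0_lt_compat; lra). lra. }
  assert (hl2 : 0 < ln 2) by (pose proof ln_lt_2; lra).
  assert (hD : 0 < Pu * (k - 1) + 1) by nra.
  assert (hA : 0 < Pu * m / (Pu * (k - 1) + 1)).
  { unfold Rdiv. apply Rmult_lt_0_compat; [nra|apply Rinv_0_lt_compat; lra]. }
  unfold rate_MRC, rate_ZF, K_cross_UL, log2. fold m k.
  rewrite scale by lra.
  rewrite lnmono by nra.
  assert (E : 1 + Pu * m / (Pu * (k - 1) + 1) - (1 + Pu * (m - k + 1))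
     = Pu * (k - 1) * (Pu * k - Pu * (m + 1) + 1) / (Pu * (k - 1) + 1)).
  { field. lra. }
  assert (E2 : k - (m + 1 - 1 / Pu) = (Pu * k - Pu * (m + 1) + 1) / Pu).
  { field. lra. }
  assert (hi : 0 < / (Pu * (k - 1) + 1)) by (apply Rinv_0_lt_compat; lra).
  assert (hi2 : 0 < / Pu) by (apply Rinv_0_lt_compat; lra).
  assert (hc : 0 < Pu * (k - 1)) by nra.
  unfold Rdiv in E, E2.
  split; intro h.
  - assert (h1 : 0 <= Pu * (k - 1) * (Pu * k - Pu * (m + 1) + 1) * / (Pu * (k - 1) + 1)) by lra.
    assert (h3 : 0 <= Pu * k - Pu * (m + 1) + 1).
    { destruct (Rle_or_lt 0 (Pu * k - Pu * (m + 1) + 1)) as [q|q]; auto.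
      assert (Pu * (k - 1) * (Pu * k - Pu * (m + 1) + 1) < 0) by nra. nra. }
    nra.
  - assert (h3 : 0 <= Pu * k - Pu * (m + 1) + 1).
    { destruct (Rle_or_lt 0 (Pu * k - Pu * (m + 1) + 1)) as [q|q]; auto. nra. }
    assert (0 <= Pu * (k - 1) * (Pu * k - Pu * (m + 1) + 1)) by nra.
    nra.
Qed.
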